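(* Consider any sequences generated by Algorithm 3 with parameters satisfying $\theta\le\left[\sigma\left(\frac4\mu+\nu\right)\right]^{-1}$, $\lambda\le\left[\frac{4\sigma\lambda_{\max}(\mathbf{W})}{\mu}\right]^{-1}$, $\beta\le\min\{\frac1\mu,\frac\nu3\}$, $\gamma\le\lambda_{\min}^+(\mathbf{W})\beta$. Let $\|(y,z)\|^2_{\mathbf{M}} := \frac1\theta\|y\|^2 + \frac1\lambda\|z\|^2_{\mathbf{W}^\dagger}$ for $y\in\mathbb{R}^{nd}$, $z\in\mathrm{range}(\mathbf{W})$. Then for every $k\ge0$, \[ \|(y^{k+1}-y^*,z^{k+1}-z^* )\|^2_{\mathbf{M}} \le \|(y^k-y^*,z^k-z^* )\|^2_{\mathbf{M}} - (\beta-2\nu)\|y^{k+1}-y^*\|^2 - \gamma\|z^{k+1}-z^*\|^2_{\mathbf{W}^\dagger} + \frac{2(1-\sigma)}\sigma\mathrm{D}_h\big((y_f^k,z_f^k),(y^*,z^* )\big) - \frac2\sigma\mathrm{D}_h\big((y_f^{k+1},z_f^{k+1}),(y^*,z^* )\big) - 2\langle x^{k+1}-x^*,y^{k+1}-y^*\rangle. \]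
   Context: $F:\mathbb{R}^{nd}\to\mathbb{R}$ is differentiable, $\mu$-strongly convex and $L$-smooth, $0<\mu\le L$. $\mathbf{W}$ is a symmetric positive semidefinite $nd\times nd$ matrix whose kernel is the consensus space $\{(x_1,\dots,x_n)\in(\mathbb{R}^d)^n:x_1=\dots=x_n\}$, with largest eigenvalue $\lambda_{\max}(\mathbf{W})$ and smallest positive eigenvalue $\lambda_{\min}^+(\mathbf{W})$; $\mathbf{W}^\dagger$ is the inverse of $\mathbf{W}$ restricted to $\mathrm{range}(\mathbf{W})$ and $\|z\|^2_{\mathbf{W}^\dagger}:=\langle\mathbf{W}^\dagger z,z\rangle$. $x^*$ is the unique minimizer of $F$ over $\ker(\mathbf{W})$; $y^*:=\nabla F(x^* )-\frac\mu2x^*$, $z^*:=-\nabla F(x^* )\in\mathrm{range}(\mathbf{W})$. $r(x):=F(x)-\frac\mu4\|x\|^2$, $h(y,z):=\frac1\mu\|y+z\|^2+\frac\nu2\|y\|^2$ (so $\nabla_yh(y,z)=\frac2\mu(y+z)+\nu y$, $\nabla_zh(y,z)=\frac2\mu(y+z)$). $\mathrm{D}_h(u,v):=h(u)-h(v)-\langle\nabla h(v),u-v\rangle$. Algorithm 3: given $x^0,y^0\in\mathbb{R}^{nd}$, $z^0\in\mathrm{range}(\mathbf{W})$, parameters $\eta,\theta,\lambda,\alpha,\beta,\gamma,\nu>0$, $\tau,\sigma\in(0,1)$, set $x_f^0=x^0$, $y_f^0=y^0$, $z_f^0=z^0$, and for $k\ge0$: $x_g^k=\tau x^k+(1-\tau)x_f^k$,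 $y_g^k=\sigma y^k+(1-\sigma)y_f^k$, $z_g^k=\sigma z^k+(1-\sigma)z_f^k$; $(x^{k+1},y^{k+1})$ satisfies $x^{k+1} = x^k + \eta\alpha(x_g^k-x^{k+1}) - \eta\nabla r(x_g^k) + \eta y^{k+1}$ and $y^{k+1} = y^k + \theta\beta(y_g^k - y^{k+1}) - \theta\nabla_y h(y_g^k,z_g^k) + \theta\nu y^{k+1} - \theta x^{k+1}$; $z^{k+1} = z^k + \lambda\gamma(z_g^k - z^{k+1}) - \lambda\mathbf{W}\nabla_z h(y_g^k,z_g^k)$; $x_f^{k+1}=x_g^k+\frac{2\tau}{2-\tau}(x^{k+1}-x^k)$, $y_f^{k+1}=y_g^k+\sigma(y^{k+1}-y^k)$, $z_f^{k+1}=z_g^k+\sigma(z^{k+1}-z^k)$. *)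

(* Defs.v *)
From HB Require Import structures.
From mathcomp Require Import all_boot all_order all_algebra.
From mathcomp Require Import all_classical all_reals all_analysis.
Set Implicit Arguments. Unset Strict Implicit. Unset Printing Implicit Defensive.
Import Order.TTheory GRing.Theory Num.Theory.
Import numFieldNormedType.Exports.
Local Open Scope ring_scope.

(* Vectors of R^{nd} are column vectors 'cV[R]_(n*d); the block of agent i,
   coordinate j, is entry (mxvec_index i j) = i*d + j. *)

Definition dotv (R : ringType) (N : nat) (u v : 'cV[R]_N) : R := (u^T *m v) 0 0.
Definition sqn (R : ringType) (N : nat) (u : 'cV[R]_N) : R := dotv u u.

Definition consensus (R : ringType) (n d : nat) (x : 'cV[R]_(n * d)) : Prop :=
  forall (i i' : 'I_n) (j : 'I_d), x (mxvec_index i j) 0 = x (mxvec_index i' j) 0.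

Definition in_range (R : ringType) (N : nat) (W : 'M[R]_N) (z : 'cV[R]_N) : Prop :=
  exists u : 'cV[R]_N, z = W *m u.

Definition is_range_inverse (R : ringType) (N : nat) (W Wd : 'M[R]_N) : Prop :=
  forall z, in_range W z -> in_range W (Wd *m z) /\ W *m (Wd *m z) = z.

Definition sqn_dag (R : ringType) (N : nat) (Wd : 'M[R]_N) (z : 'cV[R]_N) : R :=
  dotv (Wd *m z) z.

Definition sqn_M (R : fieldType) (N : nat) (Wd : 'M[R]_N) (theta lambda : R)
  (y z : 'cV[R]_N) : R :=
  theta^-1 * sqn y + lambda^-1 * sqn_dag Wd z.

Definition has_gradient (R : realType) (N : nat) (F : 'cV[R]_N -> R)
  (gradF : 'cV[R]_N -> 'cV[R]_N) : Prop :=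
  forall x, differentiable F x /\ forall v, 'd F x v = dotv (gradF x) v.

Definition strongly_convex (R : realType) (N : nat) (F : 'cV[R]_N -> R)
  (gradF : 'cV[R]_N -> 'cV[R]_N) (mu : R) : Prop :=
  forall x y, F x + dotv (gradF x) (y - x) + mu / 2 * sqn (y - x) <= F y.

Definition L_smooth (R : realType) (N : nat)
  (gradF : 'cV[R]_N -> 'cV[R]_N) (L : R) : Prop :=
  forall x y, Num.sqrt (sqn (gradF x - gradF y)) <= L * Num.sqrt (sqn (x - y)).

(* r(x) = F(x) - mu/4 ||x||^2, grad r(x) = grad F(x) - mu/2 x *)
Definition grad_r (R : fieldType) (N : nat) (gradF : 'cV[R]_N -> 'cV[R]_N) (mu : R)
  (x : 'cV[R]_N) : 'cV[R]_N := gradF x - (mu / 2) *: x.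

Definition hfun (R : fieldType) (N : nat) (mu nu : R) (y z : 'cV[R]_N) : R :=
  mu^-1 * sqn (y + z) + nu / 2 * sqn y.
Definition grad_y_h (R : fieldType) (N : nat) (mu nu : R) (y z : 'cV[R]_N) : 'cV[R]_N :=
  (2 / mu) *: (y + z) + nu *: y.
Definition grad_z_h (R : fieldType) (N : nat) (mu : R) (y z : 'cV[R]_N) : 'cV[R]_N :=
  (2 / mu) *: (y + z).

Definition D_h (R : fieldType) (N : nat) (mu nu : R) (y z y' z' : 'cV[R]_N) : R :=
  hfun mu nu y z - hfun mu nu y' z'
  - (dotv (grad_y_h mu nu y' z') (y - y') + dotv (grad_z_h mu y' z') (z - z')).

(* Main.v *)
Set Warnings "-notation-overridden,-ambiguous-paths,-notation-incompatible-prefix,-deprecated,-notation-incompatible-format".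
Require Import Defs.
From HB Require Import structures.
From mathcomp Require Import all_boot all_order all_algebra.
From mathcomp Require Import all_classical all_reals all_analysis.
From mathcomp Require Import complex spectral sesquilinear.
From mathcomp Require Import ring lra.
Import Order.TTheory GRing.Theory Num.Theory.
Local Open Scope ring_scope.
Set Implicit Arguments. Unset Strict Implicit. Unset Printing Implicit Defensive.
Section Dot.
Variable R : realType.
Variable N : nat.
Implicit Types u v w : 'cV[R]_N.

Lemma dotvE u v : dotv u v = \sum_i u i 0 * v i 0.
Proof. by rewrite /dotv !mxE; apply: eq_bigr => i _; rewrite mxE. Qed.
Lemma dotvDl u v w : dotv (u + v) w = dotv u w + dotv v w.
Proof. rewrite !dotvE -big_split /=; apply: eq_bigr => i _; rewrite !mxE; ring. Qed.
Lemma dotvDr u v w : dotv w (u + v) = dotv w u + dotv w v.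
Proof. rewrite !dotvE -big_split /=; apply: eq_bigr => i _; rewrite !mxE; ring. Qed.
Lemma dotvZl a u v : dotv (a *: u) v = a * dotv u v.
Proof. rewrite !dotvE mulr_sumr; apply: eq_bigr => i _; rewrite !mxE; ring. Qed.
Lemma dotvZr a u v : dotv v (a *: u) = a * dotv v u.
Proof. rewrite !dotvE mulr_sumr; apply: eq_bigr => i _; rewrite !mxE; ring. Qed.
Lemma dotvNl u v : dotv (- u) v = - dotv u v.
Proof. rewrite !dotvE -sumrN; apply: eq_bigr => i _; rewrite !mxE; ring. Qed.
Lemma dotvNr u v : dotv v (- u) = - dotv v u.
Proof. rewrite !dotvE -sumrN; apply: eq_bigr => i _; rewrite !mxE; ring. Qed.
Lemma dotvBl u v w : dotv (u - v) w = dotv u w - dotv v w.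
Proof. by rewrite dotvDl dotvNl. Qed.
Lemma dotvBr u v w : dotv w (u - v) = dotv w u - dotv w v.
Proof. by rewrite dotvDr dotvNr. Qed.
Lemma dotvC u v : dotv u v = dotv v u.
Proof. rewrite !dotvE; apply: eq_bigr => i _; ring. Qed.
Lemma dotv0l v : dotv 0 v = 0.
Proof. rewrite dotvE big1 // => i _; rewrite mxE; ring. Qed.
Lemma dotv0r v : dotv v 0 = 0.
Proof. by rewrite dotvC dotv0l. Qed.
Lemma sqn_ge0 u : 0 <= sqn u.
Proof. rewrite /sqn dotvE; apply: sumr_ge0 => i _; rewrite -expr2; exact: sqr_ge0. Qed.
Lemma dotv_mull (A : 'M[R]_N) u v : dotv (A *m u) v = dotv u (A^T *m v).
Proof. by rewrite /dotv trmx_mul mulmxA. Qed.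
End Dot.
Section Spec.
Variable R : realType.
Variable N : nat.
Local Notation C := (R[i]).
Local Notation f := (real_complex R).

Lemma Creal_eq (x : C) : x \is Num.real -> x = f (complex.Re x).
Proof.
case: x => a b; rewrite realE => /orP [] /=.
  by rewrite lecE /= => /andP [/eqP ->].
by rewrite lecE /= => /andP [/eqP <-].
Qed.

Lemma rV_sq_gt0 (v : 'rV[R]_N) : v != 0 -> 0 < (v *m v^T) 0 0.
Proof.
move=> vn0; rewrite mxE lt_def; apply/andP; split; last first.
  by apply: sumr_ge0 => i _; rewrite mxE -expr2 sqr_ge0.
apply: contra vn0 => /eqP H; apply/eqP/rowP => j.
have nn : forall i : 'I_N, true -> 0 <= v 0 i * v^T i 0.
  by move=> i _; rewrite mxE -expr2 sqr_ge0.
have := psumr_eq0P nn H (i:=j) isT.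
rewrite mxE -expr2 => /eqP; rewrite sqrf_eq0 => /eqP ->; by rewrite mxE.
Qed.

Lemma eig_ge0 (W : 'M[R]_N) a : (forall v : 'cV[R]_N, 0 <= (v^T *m W *m v) 0 0) ->
  eigenvalue W a -> 0 <= a.
Proof.
move=> psd /eigenvalueP [v vW vn0].
have := psd v^T; rewrite trmxK vW -scalemxAl mxE.
have := rV_sq_gt0 vn0 => H1 H2.
by rewrite -(pmulr_lge0 _ H1).
Qed.

End Spec.
Section Spec2.
Variable R : realType.
Variable N : nat.
Local Notation C := (R[i]).
Local Notation f := (real_complex R).
Local Open Scope sesquilinear_scope.

Lemma fle (p q : R) (y : C) : p <= q -> 0 <= y -> f p * y <= f q * y.
Proof. by move=> pq y0; apply: ler_wpM2r => //; rewrite lecR. Qed.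

Lemma f_real (x : R) : f x \is Num.real.
Proof. by rewrite realE !lecE /= eqxx /= le_total. Qed.

Lemma quad_diag (u : 'cV[C]_N) (s : 'rV[C]_N) :
  (u^t* *m diag_mx s *m u) 0 0 = \sum_i ((u i 0)^* * s 0 i) * u i 0.
Proof. by rewrite mxE; apply: eq_bigr => i _; rewrite mul_mx_diag !mxE. Qed.

Lemma quad_diag2 (u : 'cV[C]_N) (s : 'rV[C]_N) :
  (u^t* *m diag_mx s *m diag_mx s *m u) 0 0 = \sum_i ((u i 0)^* * s 0 i * s 0 i) * u i 0.
Proof. by rewrite mxE; apply: eq_bigr => i _; rewrite !mul_mx_diag !mxE. Qed.

Lemma spec_bounds (W : 'M[R]_N) lmax lminp :
  W^T = W -> (forall v : 'cV[R]_N, 0 <= (v^T *m W *m v) 0 0) ->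
  (forall a, eigenvalue W a -> a <= lmax) ->
  (forall a, eigenvalue W a -> 0 < a -> lminp <= a) ->
  forall c : 'cV[R]_N, sqn (W *m c) <= lmax * dotv c (W *m c) /\
                       lminp * dotv c (W *m c) <= sqn (W *m c).
Proof.
move=> Wsym psd hmax hmin c.
pose Wc := map_mx f W.
have Wc_sym : Wc \is symmetricmx.
  apply/is_hermitianmxP; rewrite expr0 scale1r.
  apply/matrixP => i j; rewrite !mxE /=.
  by rewrite -{1}Wsym mxE.
have Wc_real : Wc \is a realmx.
  by apply/mxOverP => i j; rewrite mxE f_real.
have Wnorm := symmetric_normalmx Wc_sym Wc_real.
have Wherm := realsym_hermsym Wc_sym Wc_real.
pose P := spectralmx Wc; pose s := spectral_diag Wc.
have hW : Wc = invmx P *m diag_mx s *m P by apply/orthomx_spectralP.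
have Pu : P \is unitarymx := spectral_unitarymx Wc.
have PPt : P *m P^t* = 1%:M by apply/unitarymxP.
have iP : invmx P = P^t* := invmx_unitary Pu.
have sreal : s \is a realmx := hermitian_spectral_diag_real Wherm.
have eigs : forall i, exists a, [/\ s 0 i = f a, 0 <= a, a <= lmax &
                                   (a = 0 \/ lminp <= a)].
  move=> i; exists (complex.Re (s 0 i)).
  have seq : s 0 i = f (complex.Re (s 0 i)) by apply: Creal_eq; exact: (mxOverP sreal).
  have ev : eigenvalue W (complex.Re (s 0 i)).
    rewrite -(eigenvalue_map f).
    suff ev : eigenvalue Wc (s 0 i) by move: ev; rewrite {1}seq.
    apply/eigenvalueP; exists (row i P).
      rewrite -row_mul.
      have -> : P *m Wc = diag_mx s *m P.
        by rewrite hW iP !mulmxA PPt mul1mx.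
      by apply/rowP => j; rewrite mul_diag_mx !mxE.
    apply/eqP => H0; have := (row_unitarymxP Pu) i i.
    by rewrite H0 eqxx dotmxE mul0mx mxE => /eqP; rewrite eq_sym oner_eq0.
  split => //; first exact: eig_ge0 psd ev; first exact: hmax.
  have := eig_ge0 psd ev; rewrite le_eqVlt => /orP [/eqP <-|]; first by left.
  by move=> /(hmin _ ev); right.
have mf : forall (X : 'M[R]_1), f (X 0 0) = (map_mx f X) 0 0.
  by move=> X; rewrite mxE.
pose cc := map_mx f c; pose u := P *m cc.
have ccr : cc^t* = cc^T.
  by apply/matrixP => i j; rewrite !mxE; apply/CrealP; exact: f_real.
have uT : cc^T *m P^t* = u^t* by rewrite /u trmx_mul map_mxM ccr.
have WW : Wc *m Wc = P^t* *m diag_mx s *m diag_mx s *m P.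
  by rewrite hW iP -!mulmxA (mulmxA P) PPt mul1mx.
have I1 : f (dotv c (W *m c)) = (u^t* *m diag_mx s *m u) 0 0.
  rewrite /dotv mf map_mxM -map_trmx map_mxM -/Wc -/cc hW iP.
  by rewrite -uT /u !mulmxA.
have I2 : f (sqn (W *m c)) = (u^t* *m diag_mx s *m diag_mx s *m u) 0 0.
  rewrite /sqn /dotv mf trmx_mul Wsym !map_mxM -map_trmx -/Wc -/cc.
  by rewrite (mulmxA (cc^T *m Wc)) -(mulmxA (cc^T)) WW -uT /u !mulmxA.
rewrite quad_diag in I1; rewrite quad_diag2 in I2.
split.
  suff : f (sqn (W *m c)) <= f lmax * f (dotv c (W *m c)) by rewrite -rmorphM lecR.
  rewrite I1 I2 mulr_sumr; apply: ler_sum => i _.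
  have [a [-> a0 al _]] := eigs i.
  have n0 := mul_conjC_ge0 (u i 0).
  have -> : (u i 0)^* * f a * f a * u i 0 = f (a * a) * (u i 0 * (u i 0)^*).
    by rewrite rmorphM; ring.
  have -> : f lmax * ((u i 0)^* * f a * u i 0) = f (lmax * a) * (u i 0 * (u i 0)^*).
    by rewrite rmorphM; ring.
  by apply: fle => //; nra.
suff : f lminp * f (dotv c (W *m c)) <= f (sqn (W *m c)) by rewrite -rmorphM lecR.
rewrite I1 I2 mulr_sumr; apply: ler_sum => i _.
have [a [-> a0 al ha]] := eigs i.
have n0 := mul_conjC_ge0 (u i 0).
have -> : (u i 0)^* * f a * f a * u i 0 = f (a * a) * (u i 0 * (u i 0)^*).
  by rewrite rmorphM; ring.
have -> : f lminp * ((u i 0)^* * f a * u i 0) = f (lminp * a) * (u i 0 * (u i 0)^*).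
  by rewrite rmorphM; ring.
apply: fle => //; case: ha => [->|la]; first by rewrite !mulr0.
by nra.
Qed.
End Spec2.
Section Opt.
Variable R : realType.
Variable N : nat.

Lemma range_of_orth (W : 'M[R]_N) (g : 'cV[R]_N) : W^T = W ->
  (forall v, W *m v = 0 -> dotv g v = 0) -> in_range W g.
Proof.
move=> Wsym hg.
have : (g^T <= W)%MS.
  rewrite submxE; apply/eqP/matrixP => i k; rewrite [RHS]mxE.
  pose K := cokermx W.
  have Wk : W *m col k K = 0.
    apply/matrixP => a b; have := congr1 (fun M : 'M[R]_N => M a k) (mulmx_coker W).
    rewrite !mxE => h; apply: (etrans _ h).
    by apply: eq_bigr => j _; rewrite !mxE.
  have := hg _ Wk; rewrite dotvE => <-; rewrite mxE.
  by apply: eq_bigr => j _; rewrite !mxE (ord1 i).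
move=> /submxP [D hD]; exists D^T.
by rewrite -{1}Wsym -trmx_mul -hD trmxK.
Qed.

Lemma ge0_of_small (g K : R) : 0 <= K -> (forall t, 0 < t -> - (K * t) <= g) -> 0 <= g.
Proof.
move=> K0 H; rewrite leNgt; apply/negP => g0.
pose t := - g / (K + 1).
have t0 : 0 < t by rewrite /t divr_gt0 // ?oppr_gt0 //; lra.
have ht : t * (K + 1) = - g by rewrite /t; field; lra.
have := H t t0; nra.
Qed.

Lemma opt_orth (F : 'cV[R]_N -> R) gradF mu L (W : 'M[R]_N) xs :
  strongly_convex F gradF mu -> 0 < mu -> L_smooth gradF L ->
  W *m xs = 0 -> (forall v, W *m v = 0 -> F xs <= F v) ->
  forall v, W *m v = 0 -> dotv (gradF xs) v = 0.
Proof.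
move=> sc mu0 sm Wxs opt.
suff H : forall v, W *m v = 0 -> 0 <= dotv (gradF xs) v.
  move=> v Wv; apply/eqP; rewrite eq_le H // andbT.
  have := H (- v); rewrite mulmxN Wv oppr0 dotvNr => /(_ erefl); lra.
move=> v Wv.
pose S := sqn v.
have S0 : 0 <= S := sqn_ge0 v.
apply: (@ge0_of_small _ ((L ^+ 2 + 1) * S / 2)); first by apply: divr_ge0 => //; apply: mulr_ge0 => //; rewrite addr_ge0 ?sqr_ge0.
move=> t t0.
pose x1 := xs + t *: v.
have Wx1 : W *m x1 = 0 by rewrite mulmxDr -scalemxAr Wv scaler0 Wxs addr0.
have hb := opt _ Wx1.
have ha := sc x1 xs.
have e1 : xs - x1 = - (t *: v) by rewrite /x1; apply/matrixP => i j; rewrite !mxE; ring.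
rewrite e1 dotvNr dotvZr /sqn dotvNl dotvNr opprK !dotvZl !dotvZr -/(sqn v) -/S in ha.
pose p := gradF x1 - gradF xs.
have hc := sm x1 xs.
have e2 : x1 - xs = t *: v by rewrite /x1; apply/matrixP => i j; rewrite !mxE; ring.
rewrite e2 /sqn !dotvZl !dotvZr -/(sqn v) -/S -/p in hc.
have hc2 : sqn p <= L ^+ 2 * (t * t * S).
  have sp0 := sqn_ge0 p.
  have q0 : 0 <= Num.sqrt (sqn p) := sqrtr_ge0 _.
  have := ler_pM q0 q0 hc hc; rewrite -expr2 sqr_sqrtr //.
  have tS0 : 0 <= t * (t * S) by apply: mulr_ge0; [lra| apply: mulr_ge0 => //; lra].
  move=> h; apply: (le_trans h).
  have := sqr_sqrtr tS0; rewrite expr2 => hs.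
  rewrite mulrACA hs mulrA expr2; lra.
have he : dotv (gradF xs) v = dotv (gradF x1) v - dotv p v by rewrite /p dotvBl; ring.
clearbody p.
have hd := sqn_ge0 (p - t *: v).
rewrite /sqn !dotvBl !dotvBr !dotvZl !dotvZr -/(sqn p) -/(sqn v) -/S in hd.
rewrite (dotvC v p) in hd.
rewrite he.
set d1 := dotv (gradF x1) v in ha he *.
set dp := dotv p v in hd he *.
set P := sqn p in hc2 hd.
have hd1 : 0 <= d1.
  have : 0 <= t * d1.
    have : 0 <= mu / 2 * (t * (t * S)).
      by apply: mulr_ge0; [lra | apply: mulr_ge0; [lra | apply: mulr_ge0 => //; lra]].
    lra.
  by rewrite pmulr_rge0.
have hdp : dp <= (L ^+ 2 + 1) * S / 2 * t.
  have : 2 * t * dp <= 2 * t * ((L ^+ 2 + 1) * S / 2 * t).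
    rewrite -[2 * t * (_ * _)]/(2 * t * ((L ^+ 2 + 1) * S / 2 * t)).
    have -> : 2 * t * ((L ^+ 2 + 1) * S / 2 * t) = (L ^+ 2 + 1) * (t * t * S) by field.
    nra.
  by rewrite ler_pM2l //; lra.
lra.
Qed.
End Opt.
Section Rng.
Variable R : realType.
Variable N : nat.
Implicit Types (W Wd : 'M[R]_N) (p q v : 'cV[R]_N).

Lemma range0 W : in_range W 0.
Proof. by exists 0; rewrite mulmx0. Qed.
Lemma rangeD W p q : in_range W p -> in_range W q -> in_range W (p + q).
Proof. by move=> [u ->] [w ->]; exists (u + w); rewrite mulmxDr. Qed.
Lemma rangeZ W a p : in_range W p -> in_range W (a *: p).
Proof. by move=> [u ->]; exists (a *: u); rewrite scalemxAr. Qed.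
Lemma rangeN W p : in_range W p -> in_range W (- p).
Proof. by move=> [u ->]; exists (- u); rewrite mulmxN. Qed.
Lemma rangeB W p q : in_range W p -> in_range W q -> in_range W (p - q).
Proof. by move=> hp hq; apply: rangeD => //; apply: rangeN. Qed.
Lemma rangeW W v : in_range W (W *m v).
Proof. by exists v. Qed.

Lemma ipdW W Wd p v : W^T = W -> is_range_inverse W Wd -> in_range W p ->
  dotv (Wd *m p) (W *m v) = dotv p v.
Proof.
move=> Ws Hri hp; rewrite dotvC dotv_mull Ws (Hri p hp).2; exact: dotvC.
Qed.

Lemma ipd_sym W Wd p q : W^T = W -> is_range_inverse W Wd -> in_range W p -> in_range W q ->
  dotv (Wd *m p) q = dotv (Wd *m q) p.
Proof.
move=> Ws Hri hp hq; rewrite -{1}(Hri q hq).2 ipdW //; exact: dotvC.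
Qed.

Lemma sd_bounds W Wd lmax lminp p : W^T = W -> is_range_inverse W Wd ->
  (forall c, sqn (W *m c) <= lmax * dotv c (W *m c) /\ lminp * dotv c (W *m c) <= sqn (W *m c)) ->
  (forall c, 0 <= dotv c (W *m c)) -> in_range W p ->
  [/\ 0 <= sqn_dag Wd p, sqn p <= lmax * sqn_dag Wd p & lminp * sqn_dag Wd p <= sqn p].
Proof.
move=> Ws Hri sp psd hp.
have e : p = W *m (Wd *m p) by rewrite (Hri p hp).2.
have e2 : sqn_dag Wd p = dotv (Wd *m p) (W *m (Wd *m p)) by rewrite /sqn_dag -e.
have e3 : sqn p = sqn (W *m (Wd *m p)) by rewrite -e.
rewrite e2 e3; have [h1 h2] := sp (Wd *m p); split => //.
Qed.
End Rng.
Section Core.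
Variable R : realType.
Variable N : nat.

Lemma sqnD_le (p q : 'cV[R]_N) : sqn (p + q) <= 2 * sqn p + 2 * sqn q.
Proof.
have := sqn_ge0 (p - q); rewrite /sqn !dotvDl !dotvDr !dotvNl !dotvNr (dotvC q p); lra.
Qed.

Lemma inv_le (a c : R) : 0 < a -> 0 < c -> a <= c^-1 -> c <= a^-1.
Proof.
move=> a0 c0 h.
have h1 : a * c <= 1.
  by have := ler_wpM2r (ltW c0) h; rewrite mulVf // gt_eqF.
have -> : c = a^-1 * (a * c) by rewrite mulrA mulVf ?mul1r // gt_eqF.
rewrite -{2}(mulr1 a^-1); apply: ler_wpM2l => //; rewrite invr_ge0; exact: ltW.
Qed.

Lemma hfun_ge0 mu nu (a b : 'cV[R]_N) : 0 < mu -> 0 < nu -> 0 <= hfun mu nu a b.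
Proof.
move=> m0 n0; rewrite /hfun; apply: addr_ge0; apply: mulr_ge0; rewrite ?invr_ge0 ?sqn_ge0 //; lra.
Qed.

End Core.
Ltac dnorm a b c d e f := rewrite ?(dotvC b a) ?(dotvC c a) ?(dotvC d a) ?(dotvC e a)
  ?(dotvC f a) ?(dotvC c b) ?(dotvC d b) ?(dotvC e b) ?(dotvC f b) ?(dotvC d c) ?(dotvC e c)
  ?(dotvC f c) ?(dotvC e d) ?(dotvC f d) ?(dotvC f e).
Ltac dexp := rewrite ?(dotvDl, dotvDr, dotvNl, dotvNr, dotvZl, dotvZr).

Lemma core (R : realType) (N : nat) (W Wd : 'M[R]_N)
  (lmax lminp mu nu theta lambda beta gamma sigma : R)
  (Y0 Yf Y1 Z0 Zf Z1 X1 : 'cV[R]_N) :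
  W^T = W -> is_range_inverse W Wd ->
  (forall c, sqn (W *m c) <= lmax * dotv c (W *m c) /\ lminp * dotv c (W *m c) <= sqn (W *m c)) ->
  (forall c, 0 <= dotv c (W *m c)) ->
  0 < mu -> 0 < theta -> 0 < lambda -> 0 < beta -> 0 < gamma -> 0 < nu -> 0 < sigma < 1 ->
  0 < lminp ->
  theta <= (sigma * (4 / mu + nu))^-1 ->
  lambda <= (4 * sigma * lmax / mu)^-1 ->
  beta <= Num.min (mu^-1) (nu / 3) ->
  gamma <= lminp * beta ->
  in_range W Z0 -> in_range W Zf -> in_range W Z1 ->
  let Yg := sigma *: Y0 + (1 - sigma) *: Yf in
  let Zg := sigma *: Z0 + (1 - sigma) *: Zf in
  Y1 - Y0 = (theta * beta) *: (Yg - Y1) - theta *: grad_y_h mu nu Yg Zg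
            + (theta * nu) *: Y1 - theta *: X1 ->
  Z1 - Z0 = (lambda * gamma) *: (Zg - Z1) - lambda *: (W *m grad_z_h mu Yg Zg) ->
  sqn_M Wd theta lambda Y1 Z1
  <= sqn_M Wd theta lambda Y0 Z0 - (beta - 2 * nu) * sqn Y1 - gamma * sqn_dag Wd Z1
     + (2 * (1 - sigma) / sigma) * hfun mu nu Yf Zf
     - (2 / sigma) * hfun mu nu (Yg + sigma *: (Y1 - Y0)) (Zg + sigma *: (Z1 - Z0))
     - 2 * dotv X1 Y1.
Proof.
move=> Ws Hri sp psd mu0 th0 la0 be0 ga0 nu0 /andP [si0 si1] lmin0 hth hla hbe hga
  hZ0 hZf hZ1 Yg Zg hy hz.
have eYg : Yg = sigma *: Y0 + (1 - sigma) *: Yf by [].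
have eZg : Zg = sigma *: Z0 + (1 - sigma) *: Zf by [].
clearbody Yg Zg.
have [gy egy] : {g | g = grad_y_h mu nu Yg Zg} by exists (grad_y_h mu nu Yg Zg).
have [gz egz] : {g | g = grad_z_h mu Yg Zg} by exists (grad_z_h mu Yg Zg).
rewrite -egy in hy; rewrite -egz in hz.
have hZg : in_range W Zg by rewrite eZg; apply: rangeD; apply: rangeZ.
have hDz : in_range W (Z1 - Z0) by apply: rangeB.
have hGZ : in_range W (Zg - Z1) by apply: rangeB.
have F1 : theta^-1 * sqn Y1 = theta^-1 * sqn Y0 - theta^-1 * sqn (Y1 - Y0)
                              + 2 * (theta^-1 * dotv Y1 (Y1 - Y0)).
  by rewrite /sqn; dexp; rewrite (dotvC Y0 Y1); ring.
have F3 : theta^-1 * dotv Y1 (Y1 - Y0) = beta * dotv Y1 (Yg - Y1) - dotv Y1 gy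
                                         + nu * sqn Y1 - dotv Y1 X1.
  by rewrite hy /sqn; dexp; field; rewrite gt_eqF.
have F2 : lambda^-1 * sqn_dag Wd Z1 = lambda^-1 * sqn_dag Wd Z0
            - lambda^-1 * sqn_dag Wd (Z1 - Z0) + 2 * (lambda^-1 * dotv (Wd *m (Z1 - Z0)) Z1).
  rewrite /sqn_dag !mulmxBr; dexp; rewrite (ipd_sym Ws Hri hZ1 hZ0); ring.
have key : dotv (Wd *m (W *m gz)) Z1 = dotv Z1 gz.
  by rewrite (ipd_sym Ws Hri (rangeW W gz) hZ1) ipdW.
have F4 : lambda^-1 * dotv (Wd *m (Z1 - Z0)) Z1 = gamma * dotv (Wd *m (Zg - Z1)) Z1
                                                 - dotv Z1 gz.
  by rewrite hz [in LHS]mulmxBr -!scalemxAr dotvBl !dotvZl key; field; rewrite gt_eqF.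
have F5 : 2 * (beta * dotv Y1 (Yg - Y1)) = beta * sqn Yg - beta * sqn Y1 - beta * sqn (Yg - Y1).
  by rewrite /sqn; dexp; rewrite (dotvC Yg Y1); ring.
have F6 : 2 * (gamma * dotv (Wd *m (Zg - Z1)) Z1) = gamma * sqn_dag Wd Zg
            - gamma * sqn_dag Wd Z1 - gamma * sqn_dag Wd (Zg - Z1).
  rewrite /sqn_dag !mulmxBr; dexp; rewrite (ipd_sym Ws Hri hZ1 hZg); ring.
have F7 : 2 * dotv Y1 gy + 2 * dotv Z1 gz =
     (2 / sigma) * hfun mu nu (Yg + sigma *: (Y1 - Y0)) (Zg + sigma *: (Z1 - Z0))
     - (2 * (1 - sigma) / sigma) * hfun mu nu Yf Zf + 2 * hfun mu nu Yg Zg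
     - 2 * sigma * hfun mu nu (Y1 - Y0) (Z1 - Z0)
     + (2 * (1 - sigma) / sigma) * hfun mu nu (Yf - Yg) (Zf - Zg).
  rewrite egy egz /grad_y_h /grad_z_h /hfun /sqn eYg eZg; dexp.
  dnorm Y0 Yf Y1 Z0 Zf Z1.
  by field; rewrite ?gt_eqF.
have [hb1 hb2] : beta <= mu^-1 /\ beta <= nu / 3.
  by move: hbe; rewrite le_min => /andP [].
have mi0 : 0 < mu^-1 by rewrite invr_gt0.
have c0 : 0 < sigma * (4 / mu + nu).
  by apply: mulr_gt0 => //; apply: addr_gt0 => //; apply: divr_gt0.
have hth' := inv_le th0 c0 hth.
have lmax0 : 0 < 4 * sigma * lmax / mu.
  by rewrite -invr_gt0; apply: lt_le_trans hla.
have hla' := inv_le la0 lmax0 hla.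
have Hi : 2 * sigma * hfun mu nu (Y1 - Y0) (Z1 - Z0)
          <= theta^-1 * sqn (Y1 - Y0) + lambda^-1 * sqn_dag Wd (Z1 - Z0).
  move: hDz; move: (Y1 - Y0) (Z1 - Z0) => a b hb.
  have [sd0 sdmax _] := sd_bounds Ws Hri sp psd hb.
  have hab := sqnD_le a b.
  have A0 := sqn_ge0 a; have B0 := sqn_ge0 b.
  have s2 : 2 * sigma * mu^-1 * sqn (a + b) <= 2 * sigma * mu^-1 * (2 * sqn a + 2 * sqn b).
    by apply: ler_wpM2l => //; apply: mulr_ge0; [lra| exact: ltW].
  have s3 : sigma * (4 / mu + nu) * sqn a <= theta^-1 * sqn a by apply: ler_wpM2r.
  have s4 : 4 * sigma * mu^-1 * sqn b <= 4 * sigma * mu^-1 * (lmax * sqn_dag Wd b).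
    by apply: ler_wpM2l => //; apply: mulr_ge0; [lra| exact: ltW].
  have s5 : 4 * sigma * lmax / mu * sqn_dag Wd b <= lambda^-1 * sqn_dag Wd b.
    by apply: ler_wpM2r.
  rewrite /hfun; lra.
have Hii : beta * sqn Yg + gamma * sqn_dag Wd Zg <= 2 * hfun mu nu Yg Zg.
  have [sd0 _ sdmin] := sd_bounds Ws Hri sp psd hZg.
  have t1 : gamma * sqn_dag Wd Zg <= lminp * beta * sqn_dag Wd Zg by apply: ler_wpM2r.
  have t2 : beta * (lminp * sqn_dag Wd Zg) <= beta * sqn Zg by apply: ler_wpM2l => //; exact: ltW.
  have hb : sqn Zg <= 2 * sqn (Yg + Zg) + 2 * sqn Yg.
    have := sqnD_le (Yg + Zg) (- Yg).
    have -> : Yg + Zg - Yg = Zg by rewrite addrC addKr.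
    by rewrite /sqn dotvNl dotvNr opprK.
  have t3 : beta * sqn Zg <= beta * (2 * sqn (Yg + Zg) + 2 * sqn Yg) by apply: ler_wpM2l => //; exact: ltW.
  have t4 : beta * sqn (Yg + Zg) <= mu^-1 * sqn (Yg + Zg) by apply: ler_wpM2r => //; exact: sqn_ge0.
  have t5 : beta * sqn Yg <= nu / 3 * sqn Yg by apply: ler_wpM2r => //; exact: sqn_ge0.
  rewrite /hfun.
  lra.
have Hiii1 : 0 <= beta * sqn (Yg - Y1) by apply: mulr_ge0; [exact: ltW | exact: sqn_ge0].
have Hiii2 : 0 <= gamma * sqn_dag Wd (Zg - Z1).
  have [sd0 _ _] := sd_bounds Ws Hri sp psd hGZ.
  by apply: mulr_ge0 => //; exact: ltW.
have Hiii3 : 0 <= (2 * (1 - sigma) / sigma) * hfun mu nu (Yf - Yg) (Zf - Zg).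
  apply: mulr_ge0; last exact: hfun_ge0.
  by apply: divr_ge0; [lra | exact: ltW].
rewrite /sqn_M (dotvC X1 Y1); lra.
Qed.
Unset Implicit Arguments.
Lemma DhE (R : realType) (N : nat) mu nu (y z y' z' : 'cV[R]_N) : 0 < mu ->
  D_h mu nu y z y' z' = hfun mu nu (y - y') (z - z').
Proof.
move=> mu0; rewrite /D_h /hfun /grad_y_h /grad_z_h /sqn; dexp.
rewrite ?(dotvC z y) ?(dotvC y' y) ?(dotvC z' y) ?(dotvC y' z) ?(dotvC z' z) ?(dotvC z' y').
by field; rewrite gt_eqF.
Qed.

Theorem mainTheorem11 (R : realType) (n d : nat)
  (F : 'cV[R]_(n * d) -> R) (gradF : 'cV[R]_(n * d) -> 'cV[R]_(n * d)) (mu L : R)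
  (W Wd : 'M[R]_(n * d)) (lmax lminp : R)
  (xs : 'cV[R]_(n * d))
  (eta theta lambda alpha beta gamma nu tau sigma : R)
  (x y z xf yf zf xg yg zg : nat -> 'cV[R]_(n * d)) :
  (* F differentiable, mu-strongly convex, L-smooth, 0 < mu <= L *)
  has_gradient F gradF -> 0 < mu -> mu <= L ->
  strongly_convex F gradF mu -> L_smooth gradF L ->
  (* W symmetric PSD with kernel the consensus space *)
  W^T = W -> (forall v : 'cV[R]_(n * d), 0 <= (v^T *m W *m v) 0 0) ->
  (forall v : 'cV[R]_(n * d), W *m v = 0 <-> consensus v) ->
  (* largest eigenvalue and smallest positive eigenvalue of W *)
  eigenvalue W lmax -> (forall a, eigenvalue W a -> a <= lmax) ->
  eigenvalue W lminp -> 0 < lminp ->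
  (forall a, eigenvalue W a -> 0 < a -> lminp <= a) ->
  (* Wd = W^dagger, inverse of W restricted to range(W) *)
  is_range_inverse W Wd ->
  (* xs = x^*, the (unique) minimizer of F over ker W *)
  W *m xs = 0 -> (forall v, W *m v = 0 -> F xs <= F v) ->
  (* parameters *)
  0 < eta -> 0 < theta -> 0 < lambda -> 0 < alpha -> 0 < beta -> 0 < gamma -> 0 < nu ->
  0 < tau < 1 -> 0 < sigma < 1 ->
  theta <= (sigma * (4 / mu + nu))^-1 ->
  lambda <= (4 * sigma * lmax / mu)^-1 ->
  beta <= Num.min (mu^-1) (nu / 3) ->
  gamma <= lminp * beta ->
  (* Algorithm 3 *)
  in_range W (z 0%N) ->
  xf 0%N = x 0%N -> yf 0%N = y 0%N -> zf 0%N = z 0%N ->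
  (forall k,
     xg k = tau *: x k + (1 - tau) *: xf k /\
     yg k = sigma *: y k + (1 - sigma) *: yf k /\
     zg k = sigma *: z k + (1 - sigma) *: zf k) ->
  (forall k,
     x k.+1 = x k + (eta * alpha) *: (xg k - x k.+1) - eta *: grad_r gradF mu (xg k)
              + eta *: y k.+1 /\
     y k.+1 = y k + (theta * beta) *: (yg k - y k.+1) - theta *: grad_y_h mu nu (yg k) (zg k)
              + (theta * nu) *: y k.+1 - theta *: x k.+1) ->
  (forall k,
     z k.+1 = z k + (lambda * gamma) *: (zg k - z k.+1)
              - lambda *: (W *m grad_z_h mu (yg k) (zg k))) ->
  (forall k,
     xf k.+1 = xg k + (2 * tau / (2 - tau)) *: (x k.+1 - x k) /\
     yf k.+1 = yg k + sigma *: (y k.+1 - y k) /\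
     zf k.+1 = zg k + sigma *: (z k.+1 - z k)) ->
  let ys := gradF xs - (mu / 2) *: xs in
  let zs := - gradF xs in
  forall k : nat,
    sqn_M Wd theta lambda (y k.+1 - ys) (z k.+1 - zs)
    <= sqn_M Wd theta lambda (y k - ys) (z k - zs)
       - (beta - 2 * nu) * sqn (y k.+1 - ys)
       - gamma * sqn_dag Wd (z k.+1 - zs)
       + (2 * (1 - sigma) / sigma) * D_h mu nu (yf k) (zf k) ys zs
       - (2 / sigma) * D_h mu nu (yf k.+1) (zf k.+1) ys zs
       - 2 * dotv (x k.+1 - xs) (y k.+1 - ys).
Proof.
move=> HF mu0 muL sc sm Wsym psd hker heig hmax heigmin lmin0 hmin Hri Wxs opt
  eta0 th0 la0 al0 be0 ga0 nu0 tau01 sig01 hth hla hbe hga hz0 hxf0 hyf0 hzf0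
  hg hxy hz hf ys zs k.
have [si0 si1] : 0 < sigma /\ sigma < 1 by move/andP: sig01.
have spec := spec_bounds Wsym psd hmax hmin.
have psd' : forall c, 0 <= dotv c (W *m c) by move=> c; rewrite /dotv mulmxA.
have hzs : in_range W zs.
  by apply: rangeN; apply: range_of_orth => //; exact: opt_orth sc mu0 sm Wxs opt.
have inv : forall k, in_range W (z k) /\ in_range W (zf k).
  elim => [|m [IH1 IH2]]; first by rewrite hzf0; split.
  have hzg : in_range W (zg m) by rewrite (hg m).2.2; apply: rangeD; apply: rangeZ.
  have hz1 : in_range W (z m.+1).
    have e : (1 + lambda * gamma) *: z m.+1
             = z m + (lambda * gamma) *: zg m - lambda *: (W *m grad_z_h mu (yg m) (zg m)).
      apply/matrixP => i j.
      have := congr1 (fun M : 'cV[R]_(n * d) => M i j) (hz m); rewrite !mxE => h.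
      rewrite mulrDl mul1r {1}h; ring.
    have -> : z m.+1 = (1 + lambda * gamma)^-1 *: ((1 + lambda * gamma) *: z m.+1).
      rewrite scalerA mulVf ?scale1r //; apply: lt0r_neq0.
      by apply: addr_gt0 => //; apply: mulr_gt0.
    rewrite e; apply: rangeZ; apply: rangeB; last by apply: rangeZ; exact: rangeW.
    by apply: rangeD => //; apply: rangeZ.
  split => //; rewrite (hf m).2.2; apply: rangeD => //; apply: rangeZ; exact: rangeB.
have [hzk hzfk] := inv k.
have [hzk1 _] := inv k.+1.
rewrite !DhE //.
pose Y0 := y k - ys; pose Yf := yf k - ys; pose Y1 := y k.+1 - ys.
pose Z0 := z k - zs; pose Zf := zf k - zs; pose Z1 := z k.+1 - zs.
have eyf1 : yf k.+1 - ys = (sigma *: Y0 + (1 - sigma) *: Yf) + sigma *: (Y1 - Y0).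
  rewrite (hf k).2.1 (hg k).2.1 /Y0 /Yf /Y1; apply/matrixP => i j; rewrite !mxE; ring.
have ezf1 : zf k.+1 - zs = (sigma *: Z0 + (1 - sigma) *: Zf) + sigma *: (Z1 - Z0).
  rewrite (hf k).2.2 (hg k).2.2 /Z0 /Zf /Z1; apply/matrixP => i j; rewrite !mxE; ring.
rewrite eyf1 ezf1.
have hy' : Y1 - Y0 = (theta * beta) *: ((sigma *: Y0 + (1 - sigma) *: Yf) - Y1)
     - theta *: grad_y_h mu nu (sigma *: Y0 + (1 - sigma) *: Yf) (sigma *: Z0 + (1 - sigma) *: Zf)
     + (theta * nu) *: Y1 - theta *: (x k.+1 - xs).
  have h := (hxy k).2; rewrite (hg k).2.1 (hg k).2.2 /grad_y_h in h.
  rewrite /Y0 /Yf /Y1 /Z0 /Zf /Z1 /grad_y_h /ys /zs; apply/matrixP => i j.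
  have := congr1 (fun M : 'cV[R]_(n * d) => M i j) h; rewrite !mxE => e.
  by rewrite {1}e; field; rewrite gt_eqF.
have hz' : Z1 - Z0 = (lambda * gamma) *: ((sigma *: Z0 + (1 - sigma) *: Zf) - Z1)
     - lambda *: (W *m grad_z_h mu (sigma *: Y0 + (1 - sigma) *: Yf) (sigma *: Z0 + (1 - sigma) *: Zf)).
  have eg : grad_z_h mu (sigma *: Y0 + (1 - sigma) *: Yf) (sigma *: Z0 + (1 - sigma) *: Zf)
            = grad_z_h mu (yg k) (zg k) + xs.
    rewrite (hg k).2.1 (hg k).2.2 /grad_z_h /Y0 /Yf /Z0 /Zf /ys /zs.
    by apply/matrixP => i j; rewrite !mxE; field; rewrite gt_eqF.
  rewrite eg mulmxDr Wxs addr0.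
  move: (hz k); move: (W *m grad_z_h mu (yg k) (zg k)) => V h.
  rewrite (hg k).2.2 in h.
  rewrite /Z0 /Zf /Z1 /zs; apply/matrixP => i j.
  have := congr1 (fun M : 'cV[R]_(n * d) => M i j) h; rewrite !mxE => e.
  by rewrite {1}e; ring.
have H := @core _ _ W Wd lmax lminp mu nu theta lambda beta gamma sigma
  Y0 Yf Y1 Z0 Zf Z1 (x k.+1 - xs) Wsym Hri spec psd' mu0 th0 la0 be0 ga0 nu0 sig01 lmin0
  hth hla hbe hga (rangeB hzk hzs) (rangeB hzfk hzs) (rangeB hzk1 hzs) hy' hz'.
exact: H.
Qed.
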